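(* Let $V=\{v_1,\dots,v_m\}\subset\mathbb{R}^d$ be a finite set of points and $r\in\mathbb{R}^d$. Let $S\subset V$ be $r$-balanced and let $\{S_1,\dots,S_k\}$ be the family of all minimal $r$-balanced subsets of $S$. Then $S=\bigcup_{i=1}^k S_i$.
   Context: A subset $S\subset V$ is $r$-balanced if $r\in\mathrm{relint}(\mathrm{conv}(S))$ (relative interior within the affine hull of $S$); it is minimal $r$-balanced if it is $r$-balanced and no proper subset of it is $r$-balanced. *)

(* Defs.v *)
From HB Require Import structures.
From mathcomp Require Import all_boot all_order all_algebra.
From mathcomp Require Import finmap.
From mathcomp Require Import reals.
Set Implicit Arguments. Unset Strict Implicit. Unset Printing Implicit Defensive.
Import Order.TTheory GRing.Theory Num.Theory.
Local Open Scope ring_scope.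
Local Open Scope fset_scope.

Definition in_conv (R : realType) (d : nat) (S : {fset 'rV[R]_d}) (x : 'rV[R]_d) : Prop :=
  exists lam : 'rV[R]_d -> R,
    (forall v, v \in S -> 0 <= lam v) /\
    \sum_(v <- S) lam v = 1 /\
    \sum_(v <- S) lam v *: v = x.

Definition in_aff (R : realType) (d : nat) (S : {fset 'rV[R]_d}) (x : 'rV[R]_d) : Prop :=
  exists lam : 'rV[R]_d -> R,
    \sum_(v <- S) lam v = 1 /\
    \sum_(v <- S) lam v *: v = x.

Definition sqdist (R : realType) (d : nat) (x y : 'rV[R]_d) : R :=
  \sum_(i < d) (x ord0 i - y ord0 i) ^+ 2.

Definition in_relint_conv (R : realType) (d : nat) (S : {fset 'rV[R]_d}) (r : 'rV[R]_d) : Prop :=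
  in_conv S r /\
  exists eps : R, 0 < eps /\
    forall y, in_aff S y -> sqdist y r < eps -> in_conv S y.

Definition balanced (R : realType) (d : nat) (r : 'rV[R]_d) (S : {fset 'rV[R]_d}) : Prop :=
  in_relint_conv S r.

Definition minimal_balanced (R : realType) (d : nat) (r : 'rV[R]_d) (S : {fset 'rV[R]_d}) : Prop :=
  balanced r S /\ forall T : {fset 'rV[R]_d}, T `<` S -> ~ balanced r T.

(* Main.v *)
Require Import Defs.
From HB Require Import structures.
From mathcomp Require Import all_boot all_order all_algebra.
From mathcomp Require Import finmap.
From mathcomp Require Import reals.
From mathcomp Require Import ring lra.
From Stdlib Require Import Classical_Prop.
Import Order.TTheory GRing.Theory Num.Theory.
Local Open Scope ring_scope.
Local Open Scope fset_scope.

Section S.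
Local Open Scope ring_scope.
Variables (R : realType) (d : nat).
Implicit Types (S T : {fset 'rV[R]_d}) (r v : 'rV[R]_d).

Definition pos r S := exists a : 'rV[R]_d -> R,
  (forall v, v \in S -> 0 < a v) /\ \sum_(v <- S) a v = 1 /\ \sum_(v <- S) a v *: v = r.

Lemma sum_delta (V : nmodType) S v (G : 'rV[R]_d -> V) : v \in S ->
  \sum_(u <- S) (if u == v then G u else 0) = G v.
Proof.
move=> vS; rewrite -big_mkcond -big_filter.
have -> : [seq u <- S | u == v] = [:: v].
  by apply: filter_pred1_uniq => //; apply: fset_uniq.
by rewrite big_seq1.
Qed.

Lemma sum_div S (f : 'rV[R]_d -> R) (c : R) :
  \sum_(u <- S) (f u / c) *: u = c^-1 *: \sum_(u <- S) f u *: u.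
Proof. by rewrite scaler_sumr; apply: eq_bigr => u _; rewrite scalerA mulrC. Qed.

Lemma sqdist_ge0 (x y : 'rV[R]_d) : 0 <= sqdist x y.
Proof. by apply: sumr_ge0 => i _; apply: sqr_ge0. Qed.

Lemma sqdist_scale r v (t : R) : sqdist (r + t *: (r - v)) r = t ^+ 2 * sqdist r v.
Proof.
rewrite /sqdist mulr_sumr; apply: eq_bigr => k _; rewrite !mxE; ring.
Qed.

Lemma bal_one r S v : balanced r S -> v \in S -> exists a : 'rV[R]_d -> R,
  [/\ (forall u, u \in S -> 0 <= a u), \sum_(u <- S) a u = 1,
      \sum_(u <- S) a u *: u = r & 0 < a v].
Proof.
move=> [[a0 [a0p [a0s a0r]]] [eps [eps0 H]]] vS.
set D := sqdist r v.
have D0 : 0 <= D by apply: sqdist_ge0.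
set t := eps / (eps + D + 1).
have t0 : 0 < t by apply: divr_gt0 => //; lra.
have t1 : t < 1 by rewrite /t ltr_pdivrMr; lra.
have tD : t * D < eps.
  rewrite /t mulrAC ltr_pdivrMr; last lra.
  by rewrite ltr_pM2l //; lra.
set y := (r + t *: (r - v))%R.
have yaff : in_aff S y.
  exists (fun u => (1 + t) * a0 u - (if u == v then t else 0)); split.
    by rewrite big_split /= -mulr_sumr a0s sumrN (@sum_delta _ _ _ (fun _ => t)) //; ring.
  under eq_bigr do rewrite scalerBl -scalerA.
  rewrite big_split /= -scaler_sumr a0r sumrN.
  under eq_bigr do rewrite (fun_if (fun x => x *: _)) scale0r.
  rewrite (@sum_delta _ _ _ (fun u => t *: u)) // /y scalerDl scale1r scalerBr addrA //.
have ydist : sqdist y r < eps.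
  rewrite /y sqdist_scale -/D.
  apply: le_lt_trans tD; rewrite expr2 -mulrA ler_pM2l // ler_piMl //; lra.
have [mu [mup [mus mur]]] := H y yaff ydist.
exists (fun u => (mu u + (if u == v then t else 0)) / (1 + t)); split.
- move=> u uS; apply: divr_ge0; last lra.
  by apply: addr_ge0; [apply: mup | case: ifP => _ //; lra].
- rewrite -mulr_suml big_split /= mus (@sum_delta _ _ _ (fun _ => t)) // divff //; lra.
- rewrite sum_div.
  under eq_bigr do rewrite scalerDl.
  rewrite big_split /= mur.
  under eq_bigr do rewrite (fun_if (fun x => x *: _)) scale0r.
  rewrite (@sum_delta _ _ _ (fun u => t *: u)) // /y.
  rewrite scalerBr -addrA addrNK -{1}(scale1r r) -scalerDl scalerA mulVf ?scale1r //; lra.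
- have := mup v vS; rewrite eqxx => mv; apply: divr_gt0; lra.
Qed.

Lemma bal_pos r S : balanced r S -> pos r S.
Proof.
move=> bS.
have key : forall L : seq 'rV[R]_d, {subset L <= S} -> exists a : 'rV[R]_d -> R,
  [/\ (forall u, u \in S -> 0 <= a u), \sum_(u <- S) a u = 1,
      \sum_(u <- S) a u *: u = r & forall u, u \in L -> 0 < a u].
  elim=> [|v L IH] sub.
    case: bS => [[a [ap [asum ar]]] _]; by exists a; split.
  have [|a [ap asum ar aL]] := IH; first by move=> u uL; apply: sub; rewrite inE uL orbT.
  have [b [bp bs br bv]] := @bal_one r S v bS (sub v (mem_head _ _)).
  exists (fun u => (a u + b u) / 2); split.
  - by move=> u uS; apply: divr_ge0 => //; apply: addr_ge0; [apply: ap|apply: bp].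
  - by rewrite -mulr_suml big_split /= asum bs; field.
  - rewrite sum_div; under eq_bigr do rewrite scalerDl.
    by rewrite big_split /= ar br -mulr2n -scaler_nat scalerA mulVf ?scale1r //; lra.
  - move=> u; rewrite inE => /orP[/eqP->|uL].
      have := ap v (sub v (mem_head _ _)); move=> h; apply: divr_gt0; lra.
    have := bp u (sub u _); rewrite inE uL orbT => /(_ isT) h.
    have := aL u uL => h'; apply: divr_gt0; lra.
have [a [ap asum ar aL]] := key S (fun u h => h).
by exists a; split.
Qed.

Lemma sum_nth (V : nmodType) S (F : 'rV[R]_d -> V) :
  \sum_(v <- S) F v = \sum_(i < size S) F (nth 0 S i).
Proof. by rewrite (big_nth 0) big_mkord. Qed.

Lemma delta_nth S (c : 'I_(size S) -> R) (i : 'I_(size S)) :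
  \sum_(j < size S) (if nth 0 S j == nth 0 S i then c j else 0) = c i.
Proof.
rewrite (eq_bigr (fun j => if j == i then c j else 0)).
  by rewrite -big_mkcond big_pred1_eq.
by move=> j _; rewrite nth_uniq ?fset_uniq.
Qed.

Lemma min_pos (L : seq 'rV[R]_d) (a : 'rV[R]_d -> R) :
  (forall v, v \in L -> 0 < a v) -> exists m, 0 < m /\ forall v, v \in L -> m <= a v.
Proof.
elim: L => [|u L IH] H; first by exists 1; split.
have [|m [m0 mL]] := IH; first by move=> v vL; apply: H; rewrite inE vL orbT.
have au := H u (mem_head _ _).
case: (leP m (a u)) => hm.
  exists m; split => // v; rewrite inE => /orP[/eqP->//|]; exact: mL.
exists (a u); split => // v; rewrite inE => /orP[/eqP->//|/mL]; lra.
Qed.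


Lemma pos_bal r S : pos r S -> balanced r S.
Proof.
move=> [a [ap [asum ar]]].
split; first by exists a; split => // v vS; apply/ltW/ap.
have [m [m0 mS]] := @min_pos S a ap.
set n := size S.
pose A : 'M[R]_(n, d) := \matrix_(i, j) (nth 0 S i) 0 j.
pose M : 'M[R]_(n, d + 1) := row_mx A (const_mx 1).
pose P := pinvmx M.
pose K : R := 1 + \sum_(i < n) \sum_(j < d + 1) `|P j i|.
have Kge : forall i, \sum_(j < d + 1) `|P j i| <= K - 1.
  move=> i.
  have : \sum_(j < d + 1) `|P j i| <= \sum_(i < n) \sum_(j < d + 1) `|P j i|.
    rewrite [X in _ <= X](bigD1 i) //= ler_wpDr //.
    by apply: sumr_ge0 => k _; apply: sumr_ge0 => j _.
  rewrite /K; lra.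
have K0 : 0 < K.
  have : 0 <= \sum_(i < n) \sum_(j < d + 1) `|P j i|.
    by apply: sumr_ge0 => k _; apply: sumr_ge0 => j _.
  rewrite /K; lra.
pose del := m / K.
have del0 : 0 < del by apply: divr_gt0.
exists (del * del); split; first by apply: mulr_gt0.
move=> y [mu [mus mur]] yd.
have hrow : forall (z0 : 'rV[R]_n), z0 *m A = \sum_(i < n) z0 0 i *: nth 0 S i.
  move=> z0; rewrite mulmx_sum_row; apply: eq_bigr => i _; congr (_ *: _).
  by apply/rowP => j; rewrite !mxE.
have hone : forall z0 : 'rV[R]_n, z0 *m const_mx 1 = const_mx (\sum_(i < n) z0 0 i) :> 'rV[R]_1.
  by move=> z0; apply/rowP => j; rewrite !mxE; apply: eq_bigr => i _; rewrite mxE mulr1.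
pose w : 'rV[R]_(d + 1) := row_mx (y - r) 0.
pose z : 'rV[R]_n := \row_i (mu (nth 0 S i) - a (nth 0 S i)).
have wz : w = z *m M.
  rewrite mul_mx_row hrow hone; congr row_mx.
    under eq_bigr do rewrite mxE scalerBl.
    by rewrite sumrB -(sum_nth _ _ (fun v => mu v *: v)) -(sum_nth _ _ (fun v => a v *: v)) mur ar.
  apply/rowP => j; rewrite !mxE; under eq_bigr do rewrite mxE.
  by rewrite sumrB -(sum_nth _ _ mu) -(sum_nth _ _ a) mus asum subrr.
have wM : (w <= M)%MS by rewrite wz submxMl.
pose c := w *m P.
have cM : c *m M = w by apply: mulmxKpV.
move: cM; rewrite mul_mx_row => /eq_row_mx [cA c1].
rewrite hrow in cA; rewrite hone in c1.
have csum : \sum_(i < n) c 0 i = 0.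
  by move/matrixP: c1 => /(_ 0 0); rewrite !mxE.
have wb : forall j, `|w 0 j| <= del.
  move=> j; rewrite -(splitK j); case: (split j) => k /=; rewrite ?row_mxEl ?row_mxEr !mxE.
    have h : (y 0 k - r 0 k) ^+ 2 <= sqdist y r.
      rewrite /sqdist (bigD1 k) //= ler_wpDr //.
      by apply: sumr_ge0 => i _; apply: sqr_ge0.
    rewrite ler_norml; apply/andP; split; nra.
  by rewrite normr0 ltW.
have cb : forall i, `|c 0 i| <= m.
  move=> i; rewrite mxE.
  apply: le_trans (ler_norm_sum _ _ _) _.
  apply: (@le_trans _ _ (\sum_j del * `|P j i|)).
    by apply: ler_sum => j _; rewrite normrM ler_wpM2r.
  rewrite -mulr_sumr.
  have hK := Kge i.
  have -> : m = del * K by rewrite /del divfK // gt_eqF.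
  rewrite ler_pM2l //; lra.
pose lam v := a v + \sum_(i < n) (if nth 0 S i == v then c 0 i else 0).
have lamE : forall i : 'I_n, lam (nth 0 S i) = a (nth 0 S i) + c 0 i.
  by move=> i; rewrite /lam (@delta_nth S (fun i => c 0 i)).
exists lam; split; [|split].
- move=> v vS.
  have iv : (index v S < n)%N by rewrite index_mem.
  rewrite -(nth_index 0 vS) (lamE (Ordinal iv)).
  have := cb (Ordinal iv); rewrite ler_norml => /andP[h1 _].
  have := mS _ (mem_nth 0 iv); lra.
- rewrite sum_nth; under eq_bigr do rewrite lamE.
  by rewrite big_split /= -(sum_nth _ _ a) asum csum addr0.
- rewrite (sum_nth _ _ (fun v => lam v *: v)); under eq_bigr do rewrite lamE scalerDl.
  by rewrite big_split /= -(sum_nth _ _ (fun v => a v *: v)) ar cA addrC subrK.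
Qed.

Lemma seq_argmin (L : seq 'rV[R]_d) (P : pred 'rV[R]_d) (f : 'rV[R]_d -> R) :
  has P L -> exists w, [/\ w \in L, P w & forall v, v \in L -> P v -> f w <= f v].
Proof.
elim: L => [//|u L IH] /=.
case hL: (has P L).
  have [w [wL Pw wm]] := IH hL.
  case Pu: (P u).
    case: (leP (f u) (f w)) => h.
      exists u; split => //; first exact: mem_head.
      move=> v; rewrite inE => /orP[/eqP->//|vL Pv].
      exact: le_trans h (wm v vL Pv).
    exists w; split => //; first by rewrite inE wL orbT.
    move=> v; rewrite inE => /orP[/eqP-> _|vL Pv]; first exact: ltW.
    exact: wm.
  exists w; split => //; first by rewrite inE wL orbT.
  move=> v; rewrite inE => /orP[/eqP->|vL Pv]; first by rewrite Pu.
  exact: wm.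
rewrite orbF => Pu; exists u; split => //; first exact: mem_head.
move=> v; rewrite inE => /orP[/eqP->//|vL Pv].
by move/negbT/hasPn: hL => /(_ v vL); rewrite Pv.
Qed.

Lemma elim_step r S T x (a b : 'rV[R]_d -> R) : T `<=` S -> x \in S -> x \notin T ->
  (forall v, v \in S -> 0 < a v) -> \sum_(v <- S) a v = 1 -> \sum_(v <- S) a v *: v = r ->
  (forall v, v \in T -> 0 < b v) -> \sum_(v <- T) b v = 1 -> \sum_(v <- T) b v *: v = r ->
  exists S', [/\ S' `<=` S, (#|`S'| < #|`S|)%N, x \in S' & pos r S'].
Proof.
move=> TS xS xT ap asum ar bp bsum br.
pose b' v := if v \in T then b v else 0.
have b'sum : \sum_(v <- S) b' v = 1.
  rewrite -(big_fset_incl _ TS); last by move=> v _ vT; rewrite /b' (negbTE vT).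
  by rewrite -bsum; apply: eq_big_seq => v vT; rewrite /b' vT.
have b'r : \sum_(v <- S) b' v *: v = r.
  rewrite -(big_fset_incl _ TS); last by move=> v _ vT; rewrite /b' (negbTE vT) scale0r.
  by rewrite -br; apply: eq_big_seq => v vT; rewrite /b' vT.
have b'x : b' x = 0 by rewrite /b' (negbTE xT).
have b'p : forall v, 0 <= b' v.
  by move=> v; rewrite /b'; case: ifP => // vT; apply/ltW/bp.
have hasW : has (fun w => a w < b' w) S.
  apply/negPn/negP => /hasPn H.
  have : \sum_(v <- S) (a v - b' v) = 0 by rewrite sumrB asum b'sum subrr.
  rewrite (bigD1_seq x) //=.
  have : 0 <= \sum_(i <- S | i != x) (a i - b' i).
    rewrite big_seq_cond; apply: sumr_ge0 => i /andP[iS _].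
    by have := H i iS; rewrite -leNgt subr_ge0.
  have := ap x xS; rewrite b'x; lra.
have [w0 [w0S w0P w0m]] := @seq_argmin S _ (fun w => a w / (b' w - a w)) hasW.
set s := a w0 / (b' w0 - a w0).
have aw0 := ap w0 w0S.
have s0 : 0 <= s by apply: divr_ge0; lra.
pose g v := (1 + s) * a v - s * b' v.
have gp : forall v, v \in S -> 0 <= g v.
  move=> v vS; rewrite /g; have av := ap v vS.
  case: (ltP (a v) (b' v)) => h.
    have := w0m v vS h; rewrite -/s ler_pdivlMr; last lra.
    nra.
  nra.
have gw0 : g w0 = 0.
  rewrite /g /s; field; lra.
have gx : 0 < g x by rewrite /g b'x; have := ap x xS; nra.
pose S' := [fset v in S | 0 < g v].
have memS' : forall v, (v \in S') = (v \in S) && (0 < g v) by move=> v; rewrite !inE.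
have S'S : S' `<=` S by apply/fsubsetP => v; rewrite memS' => /andP[].
have gz : forall v, v \in S -> v \notin S' -> g v = 0.
  move=> v vS; rewrite memS' vS /= -leNgt => h; have := gp v vS; lra.
exists S'; split => //.
- apply: fproper_ltn_card; rewrite fproperE S'S /=.
  apply/fsubsetPn; exists w0 => //; rewrite memS' w0S /= gw0 ltxx //.
- by rewrite memS' xS.
- exists g; split; [|split].
  + by move=> v; rewrite memS' => /andP[].
  + rewrite (big_fset_incl _ S'S) //.
    by rewrite /g big_split /= sumrN -!mulr_sumr asum b'sum; ring.
  + rewrite (big_fset_incl _ S'S); last by move=> v vS vS'; rewrite gz // scale0r.
    rewrite /g; under eq_bigr do rewrite scalerBl -!scalerA.
    rewrite big_split /= sumrN -!scaler_sumr ar b'r scalerDl scale1r.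
    by rewrite scalerA -/s addrK.
Qed.

Lemma main_ind r x : forall S, x \in S -> pos r S ->
  exists T, [/\ T `<=` S, minimal_balanced r T & x \in T].
Proof.
move=> S; have [N] := ubnP #|`S|; elim: N S => // N IH S leN xS pS.
case: (classic (exists T', T' `<` S /\ balanced r T')) => [[T' [TS bT]]|nT].
  have ltT : (#|`T'| < N)%N.
    by apply: leq_trans (fproper_ltn_card TS) _; rewrite -ltnS.
  case xT: (x \in T').
    have [T [TT' mT xT0]] := IH T' ltT xT (@bal_pos r T' bT).
    exists T; split => //.
    by apply/fsubsetP => v /(fsubsetP TT') /(fsubsetP (fproper_sub TS)).
  case: pS => a [ap [asum ar]].
  have [b [bp [bsum br]]] := @bal_pos r T' bT.
  have [S' [S'S ltS' xS' pS']] :=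
    @elim_step r S T' x a b (fproper_sub TS) xS (negbT xT) ap asum ar bp bsum br.
  have ltS'' : (#|`S'| < N)%N by apply: leq_trans ltS' _; rewrite -ltnS.
  have [T [TS' mT xT0]] := IH S' ltS'' xS' pS'.
  exists T; split => //.
  by apply/fsubsetP => v /(fsubsetP TS') /(fsubsetP S'S).
exists S; split; [exact: fsubset_refl| |exact: xS].
split; first exact: (@pos_bal r S).
by move=> T TS bT; apply: nT; exists T; split.
Qed.

End S.

Theorem corollary1 (R : realType) (d : nat) (V S : {fset 'rV[R]_d}) (r : 'rV[R]_d) :
  S `<=` V -> balanced r S ->
  forall x : 'rV[R]_d,
    x \in S <-> exists T : {fset 'rV[R]_d}, [/\ T `<=` S, minimal_balanced r T & x \in T].
Proof.
move=> _ bS x; split.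
  by move=> xS; apply: (@main_ind R d r x S xS (@bal_pos R d r S bS)).
by move=> [T [TS _ xT]]; apply: (fsubsetP TS).
Qed.
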